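(* In the reduction instance $NTP([a_j]_{j\in A},W)$, every optimal schedule $S^*$ satisfies, for every $k\in A$, $b_{i_k}\in\{0,a_k\}$, where $b_{i_k}$ is the number of employees bumped by the critical employee $i_k$ in $S^*$.
   Context: Reduction instance. Let $N\ge1$, $A=\{1,\dots,N\}$, positive integers $a_1,\dots,a_N$, positive integer $W\le\sum_{j\in A}a_j$. Set $M=N+\sum_{j\in A}a_j+1$, employees $\mathcal E=\{1,\dots,M\}$ (smaller index = more senior). For $k\in A$: $i_k=k+\sum_{j=1}^{k-1}a_j$ (critical employees), $\mathcal E^S_k=\{i: i_k<i\le i_k+a_k\}$ (stable block), $\mathcal E^S=\bigcup_k\mathcal E^S_k$. Response delays: $r_{i_k}=\sum_{j=1}^{k}a_j$; for $i\in\mathcal E^S_k$, $r_i=\sum_{j=1}^{k-1}a_j$; $r_M=\sum_{j\in A}a_j$. Let $C^*_0=2\sum_j a_j$ and $H=C^*_0-W$. A schedule $S=(s_i,e_i)_{i\in\mathcal E}$ has $s_i\ge0$, $e_i=s_i+r_i$; it is feasible if $s_1\le\dots\le s_M$ and $e_i\le H$ for all $i$. $b_i=|\{j: i<j,\ e_j<e_i\}|$ (potential bumps caused by $i$), $B(S)=\sum_i b_i$. A schedule is optimal if it is feasible and minimizes $B(S)$ among feasible schedules. *)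

(* Defs.v *)
From Stdlib Require Import Reals List Arith Lia.
Open Scope R_scope.

(* Instance data: N, a : nat -> nat (only a 1 .. a N used), W. *)
Fixpoint psum (a : nat -> nat) (k : nat) : nat :=
  match k with O => O | S k' => (psum a k' + a k)%nat end.

Definition numM (N : nat) (a : nat -> nat) : nat := (N + psum a N + 1)%nat.

Definition crit (a : nat -> nat) (k : nat) : nat := (k + psum a (k - 1))%nat.

Definition in_stable (a : nat -> nat) (k i : nat) : Prop :=
  (crit a k < i <= crit a k + a k)%nat.

Definition H_bound (N : nat) (a : nat -> nat) (W : nat) : R :=
  INR (2 * psum a N) - INR W.

(* response delay r_i: r_{i_k} = sum_{j<=k} a_j; r_i = sum_{j<k} a_j for i in
   stable block k; r_M = sum_j a_j (other indices are irrelevant). *)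
Fixpoint delay_aux (a : nat -> nat) (i k : nat) : nat :=
  match k with
  | O => O
  | S k' => if Nat.eqb i (crit a k) then psum a k
            else if andb (Nat.ltb (crit a k) i) (Nat.leb i (crit a k + a k))
                 then psum a k' else delay_aux a i k'
  end.

Definition delay (N : nat) (a : nat -> nat) (i : nat) : nat :=
  if Nat.eqb i (numM N a) then psum a N else delay_aux a i N.

(* a schedule is given by start times s : nat -> R (employees 1..M);
   e_i = s_i + r_i *)
Definition finish (N : nat) (a : nat -> nat) (s : nat -> R) (i : nat) : R :=
  s i + INR (delay N a i).

Definition feasible (N : nat) (a : nat -> nat) (W : nat) (s : nat -> R) : Prop :=
  (forall i, (1 <= i <= numM N a)%nat -> 0 <= s i) /\
  (forall i j, (1 <= i)%nat -> (i <= j <= numM N a)%nat -> s i <= s j) /\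
  (forall i, (1 <= i <= numM N a)%nat -> finish N a s i <= H_bound N a W).

Definition bumps (N : nat) (a : nat -> nat) (s : nat -> R) (i : nat) : nat :=
  length (filter (fun j => if Rlt_dec (finish N a s j) (finish N a s i) then true else false)
                 (seq (S i) (numM N a - i))).

Definition total_bumps (N : nat) (a : nat -> nat) (s : nat -> R) : nat :=
  fold_right Nat.add O (map (bumps N a s) (seq 1 (numM N a))).

Definition optimal (N : nat) (a : nat -> nat) (W : nat) (s : nat -> R) : Prop :=
  feasible N a W s /\
  forall s', feasible N a W s' -> (total_bumps N a s <= total_bumps N a s')%nat.

(* Main.v *)
Require Import Defs.
From Stdlib Require Import Reals List Arith Lia Lra Classical Bool.
Import ListNotations.

Lemma psum_mono a k k' : (k <= k')%nat -> (psum a k <= psum a k')%nat.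
Proof. induction 1; simpl; lia. Qed.

Lemma psum_pred a k : (1 <= k)%nat -> psum a k = (psum a (k-1) + a k)%nat.
Proof. intros. destruct k; [lia|]. replace (S k - 1)%nat with k by lia. reflexivity. Qed.

Lemma crit_S a k : (1 <= k)%nat -> crit a (S k) = (crit a k + a k + 1)%nat.
Proof.
  intros. unfold crit. replace (S k - 1)%nat with k by lia.
  rewrite (psum_pred a k) by lia. lia.
Qed.

Lemma crit_lt a k k' : (1 <= k)%nat -> (k < k')%nat -> (crit a k + a k + 1 <= crit a k')%nat.
Proof.
  intros Hk Hlt. induction k' as [|k' IH]; [lia|].
  destruct (Nat.eq_dec k k') as [->|Hne].
  - rewrite crit_S by lia. lia.
  - rewrite crit_S by lia. specialize (IH ltac:(lia)). lia.
Qed.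

Lemma critN a N : (1 <= N)%nat -> (crit a N + a N + 1)%nat = numM N a.
Proof. intros. unfold crit, numM. rewrite (psum_pred a N) by lia. lia. Qed.

Lemma crit_ge a k : (k <= crit a k)%nat.
Proof. unfold crit. lia. Qed.

Lemma crit_lt_M N a k : (1<=k<=N)%nat -> (crit a k + a k < numM N a)%nat.
Proof.
  intros Hk. rewrite <- (critN a N) by lia.
  destruct (Nat.eq_dec k N) as [->|]; [lia|].
  pose proof (crit_lt a k N ltac:(lia) ltac:(lia)). lia.
Qed.

Lemma delay_aux_crit a n k : (1 <= k <= n)%nat -> delay_aux a (crit a k) n = psum a k.
Proof.
  induction n as [|n IH]; intros Hk; [lia|].
  cbn [delay_aux]. destruct (Nat.eq_dec k (S n)) as [->|Hne].
  - rewrite Nat.eqb_refl. reflexivity.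
  - assert (Hc := crit_lt a k (S n) ltac:(lia) ltac:(lia)).
    replace (Nat.eqb (crit a k) (crit a (S n))) with false by (symmetry; apply Nat.eqb_neq; lia).
    replace (Nat.ltb (crit a (S n)) (crit a k)) with false by (symmetry; apply Nat.ltb_ge; lia).
    simpl. apply IH. lia.
Qed.

Lemma delay_aux_stable a n k i : (1 <= k <= n)%nat -> in_stable a k i -> delay_aux a i n = psum a (k-1).
Proof.
  unfold in_stable. induction n as [|n IH]; intros Hk Hi; [lia|].
  cbn [delay_aux]. destruct (Nat.eq_dec k (S n)) as [->|Hne].
  - replace (Nat.eqb i (crit a (S n))) with false by (symmetry; apply Nat.eqb_neq; lia).
    replace (Nat.ltb (crit a (S n)) i) with true by (symmetry; apply Nat.ltb_lt; lia).
    replace (Nat.leb i (crit a (S n) + a (S n))) with true by (symmetry; apply Nat.leb_le; lia).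
    simpl. replace (n - 0)%nat with n by lia. reflexivity.
  - assert (Hc := crit_lt a k (S n) ltac:(lia) ltac:(lia)).
    replace (Nat.eqb i (crit a (S n))) with false by (symmetry; apply Nat.eqb_neq; lia).
    replace (Nat.ltb (crit a (S n)) i) with false by (symmetry; apply Nat.ltb_ge; lia).
    simpl. apply IH; lia.
Qed.

Lemma delay_aux_lb a n k i : (1 <= k)%nat -> (k < n)%nat ->
  (crit a k + a k < i <= crit a n + a n)%nat -> (psum a k <= delay_aux a i n)%nat.
Proof.
  induction n as [|n IH]; intros Hk Hkn Hi; [lia|].
  cbn [delay_aux].
  destruct (Nat.eqb i (crit a (S n))) eqn:E1.
  - apply psum_mono; lia.
  - destruct (Nat.ltb (crit a (S n)) i && Nat.leb i (crit a (S n) + a (S n)))%bool eqn:E2.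
    + apply psum_mono; lia.
    + apply Nat.eqb_neq in E1. apply andb_false_iff in E2.
      assert (Hlt : (i < crit a (S n))%nat) by
        (destruct E2 as [E2|E2]; [apply Nat.ltb_ge in E2|apply Nat.leb_gt in E2]; lia).
      rewrite crit_S in Hlt by lia.
      destruct (Nat.eq_dec k n) as [->|]; [lia|].
      apply IH; lia.
Qed.

Lemma delay_lb N a k j : (1 <= k <= N)%nat -> (crit a k + a k < j <= numM N a)%nat ->
  (psum a k <= delay N a j)%nat.
Proof.
  intros Hk Hj. unfold delay. destruct (Nat.eqb j (numM N a)) eqn:E.
  - apply psum_mono; lia.
  - apply Nat.eqb_neq in E. pose proof (critN a N ltac:(lia)).
    destruct (Nat.eq_dec k N) as [->|]; [lia|]. apply delay_aux_lb; lia.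
Qed.

Lemma delay_crit N a k : (1<=k<=N)%nat -> delay N a (crit a k) = psum a k.
Proof.
  intros. unfold delay. pose proof (crit_lt_M N a k H).
  replace (Nat.eqb _ _) with false by (symmetry; apply Nat.eqb_neq; lia).
  apply delay_aux_crit; lia.
Qed.

Lemma delay_stable N a k i : (1<=k<=N)%nat -> in_stable a k i -> delay N a i = psum a (k-1).
Proof.
  intros Hk Hi. unfold delay. pose proof (crit_lt_M N a k Hk). unfold in_stable in Hi.
  replace (Nat.eqb _ _) with false by (symmetry; apply Nat.eqb_neq; lia).
  apply delay_aux_stable; auto; lia.
Qed.

Lemma filter_len_le {A} (f g : A -> bool) l :
  (forall x, In x l -> f x = true -> g x = true) -> (length (filter f l) <= length (filter g l))%nat.
Proof.
  induction l as [|x l IH]; intros H; simpl; [lia|].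
  assert (IH' := IH (fun y Hy => H y (or_intror Hy))).
  destruct (f x) eqn:Ef; [rewrite (H x (or_introl eq_refl) Ef); simpl; lia|].
  destruct (g x); simpl; lia.
Qed.

Lemma filter_none {A} (f : A -> bool) l :
  (forall x, In x l -> f x = false) -> length (filter f l) = 0%nat.
Proof.
  induction l as [|x l IH]; intros H; simpl; [lia|].
  rewrite (H x (or_introl eq_refl)). apply IH. intros; apply H; right; auto.
Qed.

Lemma filter_all {A} (f : A -> bool) l :
  (forall x, In x l -> f x = true) -> length (filter f l) = length l.
Proof.
  induction l as [|x l IH]; intros H; simpl; [lia|].
  rewrite (H x (or_introl eq_refl)). simpl. f_equal. apply IH. intros; apply H; right; auto.
Qed.

Lemma sum_le (f g : nat -> nat) l : (forall x, In x l -> (f x <= g x)%nat) ->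
  (fold_right Nat.add 0 (map f l) <= fold_right Nat.add 0 (map g l))%nat.
Proof.
  induction l as [|x l IH]; intros H; simpl; [lia|].
  pose proof (H x (or_introl eq_refl)). pose proof (IH (fun y Hy => H y (or_intror Hy))). lia.
Qed.

Lemma sum_lt (f g : nat -> nat) l x0 : (forall x, In x l -> (f x <= g x)%nat) -> In x0 l -> (f x0 < g x0)%nat ->
  (fold_right Nat.add 0 (map f l) < fold_right Nat.add 0 (map g l))%nat.
Proof.
  induction l as [|x l IH]; intros H Hin Hlt; simpl; [destruct Hin|].
  pose proof (H x (or_introl eq_refl)). pose proof (sum_le f g l (fun y Hy => H y (or_intror Hy))).
  destruct Hin as [->|Hin]; [lia|].
  pose proof (IH (fun y Hy => H y (or_intror Hy)) Hin Hlt). lia.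
Qed.

Theorem lemma1 (N : nat) (a : nat -> nat) (W : nat) (s : nat -> R) :
  (1 <= N)%nat ->
  (forall j, (1 <= j <= N)%nat -> (1 <= a j)%nat) ->
  (1 <= W)%nat -> (W <= psum a N)%nat ->
  optimal N a W s ->
  forall k, (1 <= k <= N)%nat ->
    bumps N a s (crit a k) = 0%nat \/ bumps N a s (crit a k) = a k.
Proof.
  intros HN Ha HW1 HW2 [Hfeas Hmin] k Hk.
  pose proof (crit_lt_M N a k Hk) as HcM.
  pose proof (crit_ge a k) as Hc1.
  set (c := crit a k) in *.
  set (M := numM N a) in *.
  destruct Hfeas as [Hnn [Hmono Hfin]].
  assert (Hdc : delay N a c = psum a k) by (apply delay_crit; auto).
  assert (Hps : INR (psum a k) = INR (psum a (k-1)) + INR (a k))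
    by (rewrite (psum_pred a k) at 1 by lia; apply plus_INR).
  assert (Hnb : forall j, (c + a k < j <= M)%nat -> finish N a s c <= finish N a s j).
  { intros j Hj. unfold finish. rewrite Hdc.
    pose proof (delay_lb N a k j Hk Hj) as Hd. apply le_INR in Hd.
    assert (s c <= s j) by (apply Hmono; lia). lra. }
  destruct (classic (forall j, in_stable a k j -> finish N a s j < finish N a s c)) as [Hall|Hex].
  - right. unfold bumps. fold M.
    replace (M - c)%nat with (a k + (M - c - a k))%nat by lia.
    rewrite seq_app, filter_app, length_app.
    rewrite filter_all, filter_none, length_seq; [lia| |].
    + intros x Hx. apply in_seq in Hx.
      destruct (Rlt_dec _ _) as [Hl|Hl]; [|reflexivity].
      pose proof (Hnb x ltac:(lia)). lra.
    + intros x Hx. apply in_seq in Hx.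
      destruct (Rlt_dec _ _) as [Hl|Hl]; [reflexivity|].
      exfalso. apply Hl. apply Hall. unfold in_stable. fold c. lia.
  - left. apply not_all_ex_not in Hex. destruct Hex as [j0 Hj0].
    apply imply_to_and in Hj0. destruct Hj0 as [Hst0 Hnl0].
    assert (Hd0 : delay N a j0 = psum a (k-1)) by (apply delay_stable; auto).
    assert (Hj0c : s c + INR (a k) <= s j0).
    { unfold finish in Hnl0. rewrite Hd0, Hdc in Hnl0. lra. }
    unfold in_stable in Hst0. fold c in Hst0.
    destruct (Nat.eq_dec (bumps N a s c) 0) as [|Hb0]; [assumption|exfalso].
    set (inb := fun i => (Nat.ltb c i && Nat.leb i (c + a k))%bool).
    assert (inbP : forall i, inb i = true <-> (c < i <= c + a k)%nat).
    { intros i. unfold inb. rewrite andb_true_iff, Nat.ltb_lt, Nat.leb_le. tauto. }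
    set (s' := fun i => if inb i then Rmax (s i) (s c + INR (a k)) else s i).
    assert (Hs'ge : forall i, s i <= s' i).
    { intros i. unfold s'. destruct (inb i); [apply Rmax_l|lra]. }
    assert (Hs'out : forall i, inb i = false -> s' i = s i).
    { intros i Hi. unfold s'. rewrite Hi. reflexivity. }
    assert (Hmono' : forall i j, (1 <= i)%nat -> (i <= j <= M)%nat -> s' i <= s' j).
    { intros i j Hi Hij. unfold s'.
      destruct (inb i) eqn:Ei; destruct (inb j) eqn:Ej.
      - apply Rle_max_compat_r; apply Hmono; lia.
      - apply inbP in Ei. assert (~ (c < j <= c + a k)%nat) by (rewrite <- inbP; congruence).
        apply Rmax_lub; [apply Hmono; lia|].
        assert (s j0 <= s j) by (apply Hmono; lia). lra.
      - eapply Rle_trans; [apply (Hmono i j); lia|apply Rmax_l].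
      - apply Hmono; lia. }
    assert (Hfin' : forall i, (1 <= i <= M)%nat -> finish N a s' i <= H_bound N a W).
    { intros i Hi. unfold s', finish. destruct (inb i) eqn:Ei.
      - apply inbP in Ei. rewrite (delay_stable N a k i Hk) by (unfold in_stable; fold c; lia).
        unfold Rmax. destruct (Rle_dec _ _).
        + pose proof (Hfin c ltac:(lia)) as Hf. unfold finish in Hf. rewrite Hdc in Hf. lra.
        + pose proof (Hfin i Hi) as Hf. unfold finish in Hf.
          rewrite (delay_stable N a k i Hk) in Hf by (unfold in_stable; fold c; lia). lra.
      - apply (Hfin i Hi). }
    assert (Hfeas' : feasible N a W s').
    { split; [|split]; auto.
      intros i Hi. pose proof (Hnn i Hi). pose proof (Hs'ge i). lra. }
    pose proof (Hmin s' Hfeas') as Hle.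
    assert (Hfge : forall j, finish N a s j <= finish N a s' j).
    { intros j. unfold finish. pose proof (Hs'ge j). lra. }
    assert (Hpt : forall i, In i (seq 1 M) -> (bumps N a s' i <= bumps N a s i)%nat).
    { intros i Hi. apply in_seq in Hi. unfold bumps. fold M.
      destruct (inb i) eqn:Ei.
      - rewrite filter_none; [lia|].
        intros x Hx. apply in_seq in Hx.
        destruct (Rlt_dec _ _) as [Hl|Hl]; [exfalso|reflexivity].
        apply inbP in Ei.
        assert (Hdi : delay N a i = psum a (k-1))
          by (apply (delay_stable N a k i Hk); unfold in_stable; fold c; lia).
        assert (Hdx : (psum a (k-1) <= delay N a x)%nat).
        { destruct (le_lt_dec x (c + a k)).
          - rewrite (delay_stable N a k x Hk) by (unfold in_stable; fold c; lia). lia.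
          - pose proof (delay_lb N a k x Hk ltac:(lia)). pose proof (psum_mono a (k-1) k ltac:(lia)). lia. }
        apply le_INR in Hdx. unfold finish in Hl. rewrite Hdi in Hl.
        assert (s' i <= s' x) by (apply Hmono'; lia). lra.
      - apply filter_len_le. intros x Hx.
        destruct (Rlt_dec (finish N a s' x) _) as [Hl|Hl]; [|discriminate].
        intros _. destruct (Rlt_dec _ _) as [Hl2|Hl2]; [reflexivity|].
        exfalso. assert (finish N a s' i = finish N a s i) by (unfold finish; rewrite Hs'out; auto).
        pose proof (Hfge x). lra. }
    assert (Hc0 : bumps N a s' c = 0%nat).
    { unfold bumps. fold M. apply filter_none. intros x Hx. apply in_seq in Hx.
      destruct (Rlt_dec _ _) as [Hl|Hl]; [exfalso|reflexivity].
      assert (Ec : inb c = false) by (destruct (inb c) eqn:E; auto; apply inbP in E; lia).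
      assert (finish N a s' c = finish N a s c) by (unfold finish; rewrite Hs'out; auto).
      destruct (le_lt_dec x (c + a k)).
      - assert (Ex : inb x = true) by (apply inbP; lia).
        unfold finish at 1 in Hl. unfold s' at 1 in Hl. rewrite Ex in Hl.
        rewrite (delay_stable N a k x Hk) in Hl by (unfold in_stable; fold c; lia).
        pose proof (Rmax_r (s x) (s c + INR (a k))). unfold finish in *. rewrite Hdc in *. lra.
      - pose proof (Hnb x ltac:(lia)). pose proof (Hfge x). lra. }
    assert (Hlt : (total_bumps N a s' < total_bumps N a s)%nat).
    { unfold total_bumps. fold M. apply (sum_lt _ _ _ c Hpt).
      - apply in_seq. lia.
      - lia. }
    lia.
Qed.
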